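(* Assume the setting below. Let $[q]\in R$. If $\nu(q)$ cannot be written as $\boldsymbol w\otimes\mathbf x$ with $\boldsymbol w\in\mathbb W$ and $\mathbf x\in\mathrm{Im}\mathbb H$, then the action of $T^k$ on $\mathbb{HP}^{k-1}$ is locally free at $[q]$ (i.e. the stabilizer of $[q]$ is finite). Furthermore, the action of $G_{\mathcal S}$ on $R$ is locally free.
   Context: $F$ is a 2-torus, Lie algebra $\mathfrak f\cong\mathbb{R}^2$, lattice $\Lambda\cong\mathbb{Z}^2$. $\mathcal{S}=\{u_1,\dots,u_k\}\subset\Lambda$ is an ordered set generating $\Lambda$, with cyclically consecutive elements linearly independent, each $u_i$ either $(p,0)$ with $p>0$ or with positive second coordinate, $u_1=(p,0)$, and convex ($u_1,\dots,u_k$ outward normals of a convex polygon). Set $v_1=u_1+u_k$, $v_i=u_i-u_{i-1}$ ($2\le i\le k$), $\Omega:\mathbb{R}^k\to\mathfrak f$, $e_i\mapsto v_i$, $\mathfrak g=\ker\Omega$. Conformal data: $\zeta_1,\dots,\zeta_k$ with $|\zeta_i|=1$, $0=\arg\zeta_1<\dots<\arg\zeta_k<2\pi$; $z_i=\zeta_i^{1/2}$, $0\le\arg z_i<\pi$; $\mathbb W=\mathrm{span}\{\mathrm{Re}\boldsymbol z,\mathrm{Im}\boldsymbol z\}\subset(\mathbb R^k)^*$ where $\boldsymbol z=(z_1,\dots,z_k)$; $B^*:(\mathbb R^k)^*\to\mathfrak g^*$ linear with kernel $\mathbb W$. $\mathbb H^k$ has coordinates $q_m=x_m+y_mj$; $\mathcal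 U=\mathbb H^k/\{\pm1\}$; $T^k$ is the diagonal torus $\{(\lambda_1,\dots,\lambda_k):\lambda_m\in U(1)\subset\mathbb C\}$ acting by $q_m\mapsto q_m\lambda_m$, modulo $(-1,\dots,-1)$, acting on $\mathcal U$ and on $\mathbb{HP}^{k-1}$ by $[q_1:\dots:q_k]\mapsto[q_1\lambda_1:\dots:q_k\lambda_k]$; its Lie algebra is $\mathbb R^k$, and $G_{\mathcal S}\subset T^k$ is the $(k-2)$-dimensional subtorus with Lie algebra $\mathfrak g$. $\nu_m(q)=(|x_m|^2-|y_m|^2,\mathrm{Re}(2ix_my_m),\mathrm{Im}(2ix_my_m))\in\mathrm{Im}\mathbb H$, $\nu=(\nu_1,\dots,\nu_k)$ viewed in $(\mathbb R^k)^*\otimes\mathrm{Im}\mathbb H$, $\mu_{\mathcal R}=B^*\circ\nu$, $P=\mu_{\mathcal R}^{-1}(0)\setminus\{0\}\subset\mathcal U$, and $R=\{[q]\in\mathbb{HP}^{k-1}:q\in P\}$. *)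

(* Defs.v *)
From HB Require Import structures.
From mathcomp Require Import all_boot all_order all_algebra.
From mathcomp Require Import all_classical all_reals.
From mathcomp Require Import trigo.
From mathcomp Require Import complex.

Set Implicit Arguments.
Unset Strict Implicit.
Unset Printing Implicit Defensive.

Import Order.TTheory GRing.Theory Num.Theory.
Local Open Scope ring_scope.

(* Index i : 'I_k, with 0 playing the role of the paper's index 1.     *)

Definition det2 (a b : int * int) : int := a.1 * b.2 - a.2 * b.1.

Definition admissible_S (k : nat) (u : 'I_k -> int * int) : Prop :=
  (forall w : int * int, exists c : 'I_k -> int,
      w = (\sum_(i < k) c i * (u i).1, \sum_(i < k) c i * (u i).2))
  /\ (forall i : 'I_k, det2 (u i) (u (ordS i)) != 0)
  /\ (forall i : 'I_k, ((u i).2 = 0 /\ 0 < (u i).1) \/ 0 < (u i).2)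
  /\ (forall i : 'I_k, val i = 0%N -> (u i).2 = 0 /\ 0 < (u i).1)
  /\ (forall i : 'I_k, ((val i).+1 < k)%N -> 0 < det2 (u i) (u (ordS i))).

Definition vS (k : nat) (u : 'I_k -> int * int) (i : 'I_k) : int * int :=
  if val i == 0%N then ((u i).1 + (u (ord_pred i)).1, (u i).2 + (u (ord_pred i)).2)
  else ((u i).1 - (u (ord_pred i)).1, (u i).2 - (u (ord_pred i)).2).

(* Omega : R^k -> f = R^2, e_i |-> v_i, as a (k x 2) matrix acting on rows *)
Definition Omega (R : realType) (k : nat) (u : 'I_k -> int * int) : 'M[R]_(k, 2) :=
  \matrix_(i < k, a < 2)
    (if val a == 0%N then ((vS u i).1)%:~R else ((vS u i).2)%:~R).

Definition in_g (R : realType) (k : nat) (u : 'I_k -> int * int) (t : 'rV[R]_k) : Prop :=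
  t *m Omega R u = 0.

(* Conformal data: arg zeta_i = th_i, 0 = th_1 < ... < th_k < 2 pi.    *)

Definition conformal_data (R : realType) (k : nat) (th : 'I_k -> R) : Prop :=
  (forall i : 'I_k, 0 <= th i < 2 * pi)
  /\ (forall i : 'I_k, val i = 0%N -> th i = 0)
  /\ (forall i : 'I_k, ((val i).+1 < k)%N -> th i < th (ordS i)).

Definition expc (R : realType) (s : R) : R[i] := Complex (cos s) (sin s).

(* zeta_i = e^{i th_i};  z_i = zeta_i^{1/2} with 0 <= arg z_i < pi, i.e. e^{i th_i/2} *)
Definition zeta (R : realType) (k : nat) (th : 'I_k -> R) (i : 'I_k) : R[i] := expc (th i).
Definition zS (R : realType) (k : nat) (th : 'I_k -> R) (i : 'I_k) : R[i] := expc (th i / 2).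

Definition inW (R : realType) (k : nat) (th : 'I_k -> R) (w : 'rV[R]_k) : Prop :=
  exists a b : R, w = a *: (\row_i complex.Re (zS th i)) + b *: (\row_i complex.Im (zS th i)).

(* Quaternions x + y j with x, y complex.                              *)

Definition quat (R : Type) := (R[i] * R[i])%type.

Definition qmul (R : realType) (p q : quat R) : quat R :=
  (p.1 * q.1 - p.2 * conjc q.2, p.1 * q.2 + p.2 * conjc q.1).

Definition qzero (R : realType) : quat R := (0, 0).

Definition qvec_nonzero (R : realType) (k : nat) (q : 'I_k -> quat R) : Prop :=
  exists m : 'I_k, q m != qzero R.

(* [q] = [q'] in HP^{k-1} = (H^k \ 0) / H^*  (left scalar multiplication) *)
Definition hp_eq (R : realType) (k : nat) (q q' : 'I_k -> quat R) : Prop :=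
  exists h : quat R, h != qzero R /\ forall m : 'I_k, q' m = qmul h (q m).

Definition csq (R : realType) (x : R[i]) : R := complex.Re x ^+ 2 + complex.Im x ^+ 2.

(* nu(q) in (R^k)^* (x) Im H, as a (k x 3) matrix: row m is nu_m(q) *)
Definition nu (R : realType) (k : nat) (q : 'I_k -> quat R) : 'M[R]_(k, 3) :=
  \matrix_(m < k, a < 3)
    (let x := (q m).1 in let y := (q m).2 in
     let w := (Complex 0 2) * x * y in
     [:: csq x - csq y; complex.Re w; complex.Im w]`_a).

(* mu_R = B^* o nu, where B^* : (R^k)^* -> g^* ~ R^(k-2) is w |-> w *m B *)
Definition muR (R : realType) (k : nat) (B : 'M[R]_(k, k - 2)) (q : 'I_k -> quat R)
  : 'M[R]_(3, k - 2) := (nu q)^T *m B.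

Definition inP (R : realType) (k : nat) (B : 'M[R]_(k, k - 2)) (q : 'I_k -> quat R) : Prop :=
  qvec_nonzero q /\ muR B q = 0.

Definition inRset (R : realType) (k : nat) (B : 'M[R]_(k, k - 2)) (q : 'I_k -> quat R) : Prop :=
  qvec_nonzero q /\ exists q', inP B q' /\ hp_eq q' q.

(* T^k = U(1)^k (the quotient by (-1,...,-1) acts trivially on HP^{k-1}) *)
Definition inTk (R : realType) (k : nat) (lam : 'I_k -> R[i]) : Prop :=
  forall m : 'I_k, csq (lam m) = 1.

Definition tact (R : realType) (k : nat) (lam : 'I_k -> R[i]) (q : 'I_k -> quat R)
  : 'I_k -> quat R := fun m => qmul (q m) (lam m, 0).

Definition inGS (R : realType) (k : nat) (u : 'I_k -> int * int) (lam : 'I_k -> R[i]) : Prop :=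
  exists t : 'rV[R]_k, in_g u t /\ forall m : 'I_k, lam m = expc (t 0 m).

Definition stabT (R : realType) (k : nat) (q : 'I_k -> quat R) : set ('I_k -> R[i]) :=
  [set lam | inTk lam /\ hp_eq q (tact lam q)].

Definition stabGS (R : realType) (k : nat) (u : 'I_k -> int * int) (q : 'I_k -> quat R)
  : set ('I_k -> R[i]) :=
  [set lam | inGS u lam /\ hp_eq q (tact lam q)].

(* Main.v *)
Require Import Defs.
From HB Require Import structures.
From mathcomp Require Import all_boot all_order all_algebra.
From mathcomp Require Import all_classical all_reals.
From mathcomp Require Import trigo.
From mathcomp Require Import complex.
From mathcomp Require Import ring lra zify.
From Stdlib Require Import Classical.
Import Order.TTheory GRing.Theory Num.Theory.
Set Implicit Arguments.
Unset Strict Implicit.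
Local Open Scope ring_scope.

Definition nn (R : realType) (p : quat R) : R := csq p.1 + csq p.2.
Definition nuc (R : realType) (p : quat R) (c : nat) : R :=
  let w := (Complex 0 2) * p.1 * p.2 in [:: csq p.1 - csq p.2; complex.Re w; complex.Im w]`_c.

Lemma stab_eq (R : realType) (h p : quat R) (l : R[i]) : qmul p (l, 0) = qmul h p ->
  [/\ complex.Re h.1 * nn p = complex.Re l * nn p,
      complex.Im h.1 * nn p = complex.Im l * nuc p 0,
      complex.Re h.2 * nn p = - complex.Im l * nuc p 1 &
      complex.Im h.2 * nn p = - complex.Im l * nuc p 2].
Proof.
move: h p l => [h1 h2] [x y] l; rewrite /qmul => -[E1 E2].
have D1 : h1 * x - h2 * conjc y - x * l = 0.
  by rewrite -E1 oppr0 mulr0 subr0 subrr.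
have D2 : h1 * y + h2 * conjc x - y * conjc l = 0.
  by rewrite -E2 mulr0 add0r subrr.
have K1 : h1 * (x * conjc x + y * conjc y) = l * x * conjc x + conjc l * y * conjc y
   + (h1 * x - h2 * conjc y - x * l) * conjc x + (h1 * y + h2 * conjc x - y * conjc l) * conjc y by ring.
have K2 : h2 * (x * conjc x + y * conjc y) = x * y * (conjc l - l)
   - (h1 * x - h2 * conjc y - x * l) * y + (h1 * y + h2 * conjc x - y * conjc l) * x by ring.
rewrite D1 D2 !mul0r !addr0 subr0 in K1 K2.
clear E1 E2 D1 D2; move: K1 K2; move: h1 h2 x y l => [a1 b1] [a2 b2] [x1 x2] [y1 y2] [l1 l2].
rewrite /nn /nuc /csq /= => -[K1 K1'] [K2 K2'].
split; lra.
Qed.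

Lemma norm_id (R : realType) (p : quat R) : nuc p 0 ^+ 2 + nuc p 1 ^+ 2 + nuc p 2 ^+ 2 = nn p ^+ 2.
Proof. case: p => [[x1 x2] [y1 y2]]; rewrite /nn /nuc /csq /=; ring. Qed.
Definition Rm (R : realType) (h : quat R) (c d : nat) : R :=
  let a := complex.Re h.1 in let b := complex.Im h.1 in
  let c' := complex.Re h.2 in let d' := complex.Im h.2 in
  nth 0 (nth [::] [:: [:: a^+2+b^+2-c'^+2-d'^+2; 2*(b*c'-a*d'); 2*(b*d'+a*c')];
      [:: 2*(b*c'+a*d'); a^+2-b^+2+c'^+2-d'^+2; 2*(c'*d'-a*b)];
      [:: 2*(b*d'-a*c'); 2*(c'*d'+a*b); a^+2-b^+2-c'^+2+d'^+2]] c) d.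

Definition Mc (R : realType) (h : quat R) (c d : nat) : R :=
  (if (c == 0%N) == (d == 0%N) then 1 else -1) * Rm h c d.

Lemma equiv_c (R : realType) (h p : quat R) (c : nat) : (c < 3)%N ->
  nuc (qmul h p) c = Mc h c 0 * nuc p 0 + Mc h c 1 * nuc p 1 + Mc h c 2 * nuc p 2.
Proof.
move: h p => [[a b] [c' d']] [[x1 x2] [y1 y2]].
case: c => [|[|[|]]] // _; rewrite /Mc /Rm /nuc /qmul /csq /=; ring.
Qed.
Definition Wv (R : realType) (h : quat R) (c : nat) : R :=
  [:: complex.Im h.1; - complex.Re h.2; - complex.Im h.2]`_c.

Lemma Wn_lem (R : realType) (h p : quat R) (l : R[i]) : qmul p (l, 0) = qmul h p ->
  forall c : 'I_3, Wv h c * nn p = complex.Im l * nuc p c.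
Proof.
move=> H c; have [_ e2 e3 e4] := stab_eq H.
case: c => [[|[|[|c]]] Hc] //=; rewrite /Wv /=; lra.
Qed.

Lemma nuc0_nn (R : realType) (p : quat R) : (forall c : 'I_3, nuc p c = 0) -> nn p = 0.
Proof.
move=> H; have := norm_id p.
rewrite (H ord0) (H (Ordinal (isT : (1 < 3)%N))) (H (Ordinal (isT : (2 < 3)%N))).
move=> e; apply/eqP; rewrite -sqrf_eq0 -e; apply/eqP; ring.
Qed.

Lemma nn_nuc0 (R : realType) (p : quat R) : nn p = 0 -> forall c : 'I_3, nuc p c = 0.
Proof.
move=> H; have := norm_id p; rewrite H => e.
have a0 : nuc p 0 = 0 by nra.
have a1 : nuc p 1 = 0 by nra.
have a2 : nuc p 2 = 0 by nra.
by case=> [[|[|[|c]]] Hc] //=.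
Qed.

Lemma core1 (R : realType) k (q : 'I_k -> quat R) (A Bv : 'I_3 -> R) (C S : 'I_k -> R) (i0 i1 : 'I_k)
 (Hrep : forall m (c : 'I_3), nuc (q m) c = A c * C m + Bv c * S m)
 (HCS : forall m, C m ^+ 2 + S m ^+ 2 = 1)
 (H0 : C i0 = 1 /\ S i0 = 0) (H1 : 0 < S i1)
 (ND : forall p r : R, (forall c, p * A c + r * Bv c = 0) -> p = 0 /\ r = 0)
 (l : 'I_k -> R[i]) (h : quat R) (Hl : inTk l) (Hh : forall m, qmul (q m) (l m, 0) = qmul h (q m)) :
 exists g : R, g ^+ 2 = 1 /\ forall m, l m = Complex g 0.
Proof.
have Wn m := Wn_lem (Hh m).
have Re1 m : complex.Re (l m) * nn (q m) = complex.Re h.1 * nn (q m).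
  by have [e1 _ _ _] := stab_eq (Hh m).
have nz m : nn (q m) != 0.
  apply/eqP => /nn_nuc0 z.
  have [] := ND (C m) (S m).
    by move=> c; have := z c; rewrite Hrep => e; rewrite -e; ring.
  move=> c0 s0; have := HCS m; rewrite c0 s0; lra.
case: H0 => C0 S0.
set n0 := nn (q i0); set n1 := nn (q i1).
set s0 := complex.Im (l i0); set s1 := complex.Im (l i1).
have key : forall c : 'I_3, (s0 * n1 - s1 * n0 * C i1) * A c + (-(s1 * n0 * S i1)) * Bv c = 0.
  move=> c; have e0 := Wn i0 c; have e1 := Wn i1 c; rewrite !Hrep C0 S0 in e0 e1.
  rewrite -/n0 -/s0 in e0; rewrite -/n1 -/s1 in e1.
  have e0' := congr1 (fun z => z * n1) e0; have e1' := congr1 (fun z => z * n0) e1.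
  simpl in e0', e1'; lra.
have [pz rz] := ND _ _ key.
have s1z : s1 = 0.
  move: rz => /eqP; rewrite oppr_eq0 !mulf_eq0 (negbTE (nz i0)) (gt_eqF H1) !orbF.
  by move/eqP.
have s0z : s0 = 0.
  move: pz; rewrite s1z !mul0r subr0 => /eqP; rewrite mulf_eq0 (negbTE (nz i1)) !orbF.
  by move/eqP.
have Wz : forall c : 'I_3, Wv h c = 0.
  move=> c; have := Wn i0 c; rewrite -/s0 s0z mul0r => /eqP.
  by rewrite mulf_eq0 (negbTE (nz i0)) orbF => /eqP.
have sz : forall m, complex.Im (l m) = 0.
  move=> m; apply/eqP; apply/negPn/negP => sn.
  have : nn (q m) = 0.
    apply: nuc0_nn => c; have := Wn m c; rewrite Wz mul0r => /esym/eqP.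
    by rewrite mulf_eq0 (negbTE sn) /= => /eqP.
  by apply/eqP; rewrite nz.
exists (complex.Re h.1); split.
  have := Hl i0; rewrite /csq.
  have := Re1 i0; move/(mulIf (nz i0)) => ->; rewrite sz; lra.
move=> m; have := Re1 m; move/(mulIf (nz m)) => <-.
by have := sz m; case: (l m) => a b /= ->.
Qed.
Definition epsR (R : realFieldType) (x : R) : int := if 0 < x then 1 else if x < 0 then -1 else 0.

Lemma epsR_pos (R : realFieldType) (x : R) : epsR x = 1 -> 0 < x.
Proof. by rewrite /epsR; case: ifP => // _; case: ifP. Qed.
Lemma epsR_neg (R : realFieldType) (x : R) : epsR x = -1 -> x < 0.
Proof. by rewrite /epsR; case: ifP => // _; case: ifP. Qed.
Lemma epsR_zero (R : realFieldType) (x : R) : epsR x = 0 -> x = 0.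
Proof.
rewrite /epsR; case: ifP => // H1; case: ifP => // H2 _.
by apply/eqP; rewrite eq_le !leNgt H1 H2.
Qed.
Lemma epsR_gt0 (R : realFieldType) (x : R) : 0 < x -> epsR x = 1.
Proof. by rewrite /epsR => ->. Qed.
Lemma epsR_lt0 (R : realFieldType) (x : R) : x < 0 -> epsR x = -1.
Proof. by move=> H; rewrite /epsR H lt_gtF. Qed.
Lemma epsR_0 (R : realFieldType) : epsR (0 : R) = 0.
Proof. by rewrite /epsR ltxx. Qed.

Lemma epsR_cases (R : realFieldType) (x : R) :
  [\/ 0 < x /\ epsR x = 1, x < 0 /\ epsR x = -1 | x = 0 /\ epsR x = 0].
Proof.
have [H|H|H] := ltrgtP x 0.
- by apply: Or32; split => //; apply: epsR_lt0.
- by apply: Or31; split => //; apply: epsR_gt0.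
- by apply: Or33; split => //; rewrite H epsR_0.
Qed.

Lemma sgn_comb (R : realFieldType) (p r b c : R) (e : int) : 0 < p -> 0 < r -> (e = 1 \/ e = -1) ->
  epsR b = e -> epsR c = e -> epsR (p * b + r * c) = e.
Proof.
move=> hp hr [] -> hb hc.
- apply: epsR_gt0; have := epsR_pos hb; have := epsR_pos hc; nra.
- apply: epsR_lt0; have := epsR_neg hb; have := epsR_neg hc; nra.
Qed.

Lemma sgn_scale (R : realFieldType) (r c : R) : 0 < r -> epsR (r * c) = epsR c.
Proof.
move=> hr; have [[H ->]|[H ->]|[H ->]] := epsR_cases c.
- by apply: epsR_gt0; nra.
- by apply: epsR_lt0; nra.
- by rewrite H mulr0 epsR_0.
Qed.

Lemma sgn_opp (R : realFieldType) (c : R) : epsR (- c) = - epsR c.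
Proof.
have [[H ->]|[H ->]|[H ->]] := epsR_cases c.
- by apply: epsR_lt0; lra.
- by apply: epsR_gt0; lra.
- by rewrite H oppr0 epsR_0.
Qed.

Lemma epsR_nz (R : realFieldType) (c : R) (e : int) : c != 0 -> (e = 1 \/ e = -1) -> epsR c != e -> epsR c = - e.
Proof.
move=> cn he; have [[H ->]|[H ->]|[H ->]] := epsR_cases c.
- by case: he => ->.
- by case: he => ->.
- by move: cn; rewrite H eqxx.
Qed.

Lemma epsR_pm (R : realFieldType) (c : R) : c != 0 -> epsR c = 1 \/ epsR c = -1.
Proof.
move=> cn; have [[H ->]|[H ->]|[H ->]] := epsR_cases c; [left|right|] => //.
by move: cn; rewrite H eqxx.
Qed.

Lemma pattern (R : realFieldType) (k : nat) (g : 'I_k -> R) (k1 : (1 < k)%N)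
  (H3 : forall i j l : 'I_k, (i < j)%N -> (j < l)%N ->
      exists p r : R, [/\ 0 < p, 0 < r & g j = p * g i + r * g l])
  (Hnz : exists m, g m != 0) :
  [\/ exists e j, (e = 1 \/ e = -1) /\ forall m : 'I_k, epsR (g m) = if (m <= j)%N then e else - e,
      exists e, (e = 1 \/ e = -1) /\ forall m : 'I_k, epsR (g m) = if nat_of_ord m == 0%N then 0 else e
    | exists e (m0 : 'I_k), [/\ (e = 1 \/ e = -1), (0 < m0)%N &
        forall m : 'I_k, epsR (g m) = if (m < m0)%N then e else if nat_of_ord m == nat_of_ord m0 then 0 else - e]].
Proof.
have k0 : (0 < k)%N by lia.
pose i0 := Ordinal k0; pose i1 := Ordinal k1.
have val0 : forall m : 'I_k, val m = 0%N -> m = i0 by move=> m hm; apply: val_inj.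
have val1 : forall m : 'I_k, val m = 1%N -> m = i1 by move=> m hm; apply: val_inj.
have [g0|g0] := eqVneq (g i0) 0.
  have g1 : g i1 != 0.
    apply/negP => /eqP g1; case: Hnz => m; apply/negP; rewrite negbK.
    have [m0|[m1|m2]] : (m:nat) = 0%N \/ (m:nat) = 1%N \/ (1 < m)%N by lia.
    - by rewrite (val0 _ m0) g0.
    - by rewrite (val1 _ m1) g1.
    - have [p [r [hp hr E]]] := H3 i0 i1 m isT m2.
      move: E; rewrite g0 g1 mulr0 add0r => /esym/eqP; rewrite mulf_eq0 gt_eqF //.
  apply: Or32; exists (epsR (g i1)); split; first exact: epsR_pm.
  move=> m; have [m0|[m1|m2]] : (m:nat) = 0%N \/ (m:nat) = 1%N \/ (1 < m)%N by lia.
  - by rewrite (val0 _ m0) g0 epsR_0.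
  - by rewrite (val1 _ m1).
  - have [p [r [hp hr E]]] := H3 i0 i1 m isT m2.
    rewrite ifN; last by apply/eqP; lia.
    by rewrite E g0 mulr0 add0r sgn_scale.
pose e := epsR (g i0).
have he : e = 1 \/ e = -1 by exact: epsR_pm.
have [[m0 hm0]|nozero] := classic (exists m0, g m0 = 0).
  have m0pos : (0 < m0)%N.
    case: (posnP m0) => // /val0 hm; by move: g0; rewrite -hm hm0 eqxx.
  apply: Or33; exists e, m0; split => // m.
  have [lt|gt|eq] := ssrnat.ltngtP m m0.
  - have [m00|mpos] := posnP m; first by rewrite (val0 _ m00).
    have [p [r [hp hr E]]] := H3 i0 m m0 mpos lt.
    by rewrite E hm0 mulr0 addr0 sgn_scale.
  - try (have -> : (m < m0)%N = false by lia).
    try (have -> : (nat_of_ord m == nat_of_ord m0) = false by lia).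
    have [p [r [hp hr E]]] := H3 i0 m0 m m0pos gt.
    move: E; rewrite hm0 => /esym/eqP; rewrite addr_eq0 => /eqP E.
    have : epsR (- (p * g i0)) = epsR (r * g m) by rewrite E opprK.
    by rewrite sgn_opp !sgn_scale // => <-.
  - try (have -> : (m < m0)%N = false by lia).
    by rewrite ?eq ?eqxx (val_inj eq) hm0 epsR_0.
have gnz : forall m, g m != 0 by move=> m; apply/eqP => hm; apply: nozero; exists m.
apply: Or31.
have [allE|someN] := classic (forall m, epsR (g m) = e).
  have kk : (k.-1 < k)%N by lia.
  exists e, (Ordinal kk); split => // m; rewrite /= ifT; [exact: allE | move: (ltn_ord m); lia].
have exP : exists n, [exists m : 'I_k, (nat_of_ord m == n) && (epsR (g m) != e)].
  have [m hm] := not_all_ex_not _ _ someN.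
  by exists (nat_of_ord m); apply/existsP; exists m; rewrite eqxx /=; apply/eqP.
case: (ex_minnP exP) => n1 /existsP [m1 /andP [/eqP hm1 hne]] hmin.
have m1pos : (0 < m1)%N.
  case: (posnP m1) => // /val0 h; by move: hne; rewrite h eqxx.
have first : forall m : 'I_k, (m < m1)%N -> epsR (g m) = e.
  move=> m hm; apply/eqP; apply/negPn/negP => H.
  have := hmin (nat_of_ord m) (introT existsP (ex_intro _ m (introT andP (conj (eqxx _) H)))).
  lia.
have jk : (m1.-1 < k)%N by move: (ltn_ord m1); lia.
exists e, (Ordinal jk); split => // m; rewrite /=.
case: ifP => hm; first by apply: first; lia.
have [mm|mg] : nat_of_ord m = nat_of_ord m1 \/ (m1 < m)%N by lia.
  by rewrite (val_inj mm); exact: epsR_nz (gnz m1) he hne.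
have [p [r [hp hr E]]] := H3 (Ordinal jk) m1 m ltac:(rewrite /=; lia) mg.
have hj : epsR (g (Ordinal jk)) = e by apply: first; rewrite /=; lia.
case: (eqVneq (epsR (g m)) e) => [hE|hN].
  by have := sgn_comb hp hr he hj hE; rewrite -E => /eqP; rewrite (negbTE hne).
exact: epsR_nz (gnz m) he hN.
Qed.
Definition cS k (eps : 'I_k -> int) (m : 'I_k) : int :=
  eps m + (if nat_of_ord m == k.-1 then 1 else -1) * eps (ordS m).

Lemma ordS_val k (m : 'I_k) : nat_of_ord (ordS m) = if nat_of_ord m == k.-1 then 0%N else (m.+1)%N.
Proof.
rewrite /ordS /=; have hk := ltn_ord m; case: eqP => h.
  have -> : m.+1 = k by lia.
  by rewrite modnn.
by rewrite modn_small //; lia.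
Qed.

Lemma ord_pred_val k (m : 'I_k) : (0 < m)%N -> nat_of_ord (ord_pred m) = m.-1.
Proof.
move=> hm; rewrite /ord_pred /=; have := ltn_ord m => hk.
have -> : (m + k).-1 = m.-1 + k by lia.
by rewrite modnDr modn_small //; lia.
Qed.

Lemma ord_pred_val0 k (m : 'I_k) : nat_of_ord m = 0%N -> nat_of_ord (ord_pred m) = k.-1.
Proof.
move=> hm; rewrite /ord_pred /= hm add0n modn_small //; have := ltn_ord m; lia.
Qed.

Lemma telescope k (eps : 'I_k -> int) (a : 'I_k -> int) :
  \sum_i eps i * (a i + (if nat_of_ord i == 0%N then 1 else -1) * a (ord_pred i))
  = \sum_m cS eps m * a m.
Proof.
have E2 : \sum_i eps i * ((if nat_of_ord i == 0%N then 1 else -1) * a (ord_pred i))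
  = \sum_m eps (ordS m) * ((if nat_of_ord m == k.-1 then 1 else -1) * a m).
  rewrite (reindex_inj (@ordS_inj k)); apply: eq_bigr => m _; rewrite ordSK ordS_val.
  by case: (nat_of_ord m == k.-1).
transitivity (\sum_i eps i * a i + \sum_i eps i * ((if nat_of_ord i == 0%N then 1 else -1) * a (ord_pred i))).
  by rewrite -big_split; apply: eq_bigr => i _; rewrite mulrDr.
rewrite E2 -big_split; apply: eq_bigr => m _ /=; rewrite /cS; ring.
Qed.

Lemma sum_delta k (j : 'I_k) (x : int) (a : 'I_k -> int) :
  \sum_m (if nat_of_ord m == nat_of_ord j then x else 0) * a m = x * a j.
Proof.
rewrite (bigD1 j) //= eqxx big1 ?addr0 // => m hm.
rewrite ifF ?mul0r //; apply/negbTE; apply: contraNN hm => /eqP h.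
by apply/eqP; apply: val_inj.
Qed.

Lemma cS_I k (eps : 'I_k -> int) (e : int) (j : 'I_k) : (e = 1 \/ e = -1) ->
  (forall m : 'I_k, eps m = if (m <= j)%N then e else - e) ->
  forall m, cS eps m = if nat_of_ord m == nat_of_ord j then 2 * e else 0.
Proof.
move=> he H m; rewrite /cS !H ordS_val; move: (ltn_ord m) (ltn_ord j) => hm hj.
have [hk|hk] := eqVneq (nat_of_ord m) k.-1; rewrite ?hk ?eqxx ?(negbTE hk) /=;
  repeat (case: ifP => ?); lia.
Qed.

Lemma cS_II0 k (eps : 'I_k -> int) (e : int) : (1 < k)%N -> (e = 1 \/ e = -1) ->
  (forall m : 'I_k, eps m = if nat_of_ord m == 0%N then 0 else e) ->
  forall m, cS eps m = (if nat_of_ord m == 0%N then - e else 0) + (if nat_of_ord m == k.-1 then e else 0).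
Proof.
move=> k1 he H m; rewrite /cS !H ordS_val; move: (ltn_ord m) => hm.
have [hk|hk] := eqVneq (nat_of_ord m) k.-1; rewrite ?hk ?eqxx ?(negbTE hk) /=;
  repeat (case: ifP => ?); lia.
Qed.

Lemma cS_IIm k (eps : 'I_k -> int) (e : int) (m0 : 'I_k) : (0 < m0)%N -> (e = 1 \/ e = -1) ->
  (forall m : 'I_k, eps m = if (m < m0)%N then e else if nat_of_ord m == nat_of_ord m0 then 0 else - e) ->
  forall m, cS eps m = (if nat_of_ord m == m0.-1 then e else 0) + (if nat_of_ord m == nat_of_ord m0 then e else 0).
Proof.
move=> m0p he H m; rewrite /cS !H ordS_val; move: (ltn_ord m) (ltn_ord m0) => hm hm0.
have [hk|hk] := eqVneq (nat_of_ord m) k.-1; rewrite ?hk ?eqxx ?(negbTE hk) /=;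
  repeat (case: ifP => ?); lia.
Qed.
Lemma expcD (R : realType) (a b : R) : expc (a + b) = expc a * expc b.
Proof. by rewrite /expc sinD cosD /=; congr (Complex _ _); ring. Qed.

Lemma expc0 (R : realType) : expc (0 : R) = 1.
Proof. by rewrite /expc cos0 sin0. Qed.

Lemma expc_mulN (R : realType) (a : R) : expc a * expc (- a) = 1.
Proof. by rewrite -expcD subrr expc0. Qed.

Lemma expc_neq0 (R : realType) (a : R) : expc a != 0.
Proof.
apply/eqP => h; have := expc_mulN a; rewrite h mul0r => /eqP; rewrite eq_sym oner_eq0.
by [].
Qed.

Lemma expcN (R : realType) (a : R) : expc (- a) = (expc a)^-1.
Proof. by rewrite (mulr1_eq (expc_mulN a)). Qed.

Lemma expc_nat (R : realType) (a : R) (n : nat) : expc (n%:R * a) = expc a ^+ n.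
Proof.
elim: n => [|n IH]; first by rewrite mul0r expc0 expr0.
by rewrite exprSr -addn1 natrD mulrDl mul1r expcD IH.
Qed.

Lemma expc_int (R : realType) (a : R) (n : int) : expc (n%:~R * a) = expc a ^ n.
Proof.
case: n => n.
  have -> : ((Posz n)%:~R : R) = n%:R by [].
  by rewrite expc_nat.
have -> : ((Negz n)%:~R : R) = - (n.+1)%:R by rewrite NegzE mulrNz.
by rewrite mulNr expcN expc_nat.
Qed.

Lemma expc_sum (R : realType) k (F : 'I_k -> R) : expc (\sum_i F i) = \prod_i expc (F i).
Proof. exact: (big_morph (@expc R) (@expcD R) (expc0 R)). Qed.

Lemma csq_expc (R : realType) (a : R) : csq (expc a) = 1.
Proof. by rewrite /csq /expc /= cos2Dsin2. Qed.

Lemma roots_fin (R : realType) (N : nat) : (0 < N)%N -> finite_set [set z : R[i] | z ^+ N = 1].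
Proof.
move=> N0; have [r Hr] := closed_field_poly_normal ('X^N - 1%:P : {poly R[i]}).
apply: (@sub_finite_set _ _ [set` r]); last by apply/finite_seqP; exists r.
move=> z /= hz; have : root ('X^N - 1%:P) z by rewrite rootE !hornerE hz subrr.
by rewrite Hr lead_coefXnsubC // scale1r root_prod_XsubC.
Qed.

Lemma pow_root (R : realType) (x : R[i]) (D : int) : x != 0 -> x ^ D = 1 -> x ^+ `|D|%N = 1.
Proof.
move=> xn; case: D => n //= h.
by apply/eqP; rewrite -invr_eq1; apply/eqP.
Qed.

Lemma elim_one (R : realType) (X Y : R[i]) (p q r : int) : Y != 0 ->
  X ^ p * Y ^ q = 1 -> X ^ p * Y ^ r = 1 -> Y ^ (r - q) = 1.
Proof.
move=> yn e1 e2.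
have f1 : (Y ^ q)^-1 = X ^ p by apply: mulr1_eq; rewrite mulrC.
have f2 : (Y ^ r)^-1 = X ^ p by apply: mulr1_eq; rewrite mulrC.
have f : Y ^ q = Y ^ r by apply: invr_inj; rewrite f1 f2.
by rewrite expfzDr // -invr_expz f mulfV // expfz_neq0.
Qed.

Lemma powz_both (R : realType) (x y : R[i]) (a b c : int) : x ^ a * y ^ b = 1 ->
  x ^ (a * c) * y ^ (b * c) = 1.
Proof. by move=> h; rewrite -!exprz_exp -expfzMl h exp1rz. Qed.

Lemma two_rel (R : realType) (x y : R[i]) (a0 a1 b0 b1 : int) : x != 0 -> y != 0 ->
  x ^ a0 * y ^ b0 = 1 -> x ^ a1 * y ^ b1 = 1 ->
  x ^ (a0 * b1 - a1 * b0) = 1 /\ y ^ (a0 * b1 - a1 * b0) = 1.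
Proof.
move=> xn yn h0 h1; split.
  apply: (@elim_one _ y x (b0 * b1)) => //.
    by rewrite mulrC [b0 * b1]mulrC; apply: powz_both.
  by rewrite mulrC; apply: powz_both.
have -> : a0 * b1 - a1 * b0 = b1 * a0 - b0 * a1 by ring.
apply: (@elim_one _ x y (a0 * a1)) => //.
  exact: powz_both.
by rewrite [a0 * a1]mulrC; apply: powz_both.
Qed.
Lemma nn_ge0 (R : realType) (p : quat R) : 0 <= nn p.
Proof. rewrite /nn /csq; nra. Qed.

Lemma int1R (R : realType) : ((1 : int)%:~R : R) = 1. Proof. by []. Qed.
Lemma intN1R (R : realType) : ((-1 : int)%:~R : R) = -1. Proof. by rewrite intrN. Qed.

Lemma eps_sq (R : realType) (x : R) : x != 0 -> ((epsR x)%:~R : R) ^+ 2 = 1.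
Proof. by move=> xn; case: (epsR_pm xn) => ->; rewrite ?int1R ?intN1R ?sqrrN expr1n. Qed.

Lemma abs_eps (R : realType) (x : R) : x != 0 -> `|x| = (epsR x)%:~R * x.
Proof.
move=> xn; case: (epsR_pm xn) => he; rewrite he.
  by rewrite int1R mul1r ger0_norm // ltW // epsR_pos.
by rewrite intN1R mulN1r ltr0_norm // epsR_neg.
Qed.

Lemma core2 (R : realType) k (q : 'I_k -> quat R) (f : 'I_k -> R) (X : 'I_3 -> R)
 (Hrep : forall m (c : 'I_3), nuc (q m) c = f m * X c)
 (Hq : exists m, nn (q m) != 0)
 (l : 'I_k -> R[i]) (h : quat R) (Hl : inTk l) (Hh : forall m, qmul (q m) (l m, 0) = qmul h (q m)) :
 exists g s : R, (g ^+ 2 + s ^+ 2 = 1) /\ (forall m, f m != 0 -> l m = Complex g ((epsR (f m))%:~R * s)).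
Proof.
pose c0 : 'I_3 := ord0; pose c1 : 'I_3 := Ordinal (isT : (1 < 3)%N).
pose c2 : 'I_3 := Ordinal (isT : (2 < 3)%N).
pose X2 := X c0 ^+ 2 + X c1 ^+ 2 + X c2 ^+ 2.
have nnsq m : nn (q m) ^+ 2 = f m ^+ 2 * X2.
  rewrite -norm_id (Hrep m c0) (Hrep m c1) (Hrep m c2) /X2; ring.
have [m1 hm1] := Hq.
have X2ge : 0 <= X2 by rewrite /X2; nra.
have X2n : X2 != 0.
  apply/eqP => e; move: hm1; rewrite -sqrf_eq0 nnsq e mulr0 eqxx; by [].
have X2pos : 0 < X2 by rewrite lt_def X2n X2ge.
pose N := Num.sqrt X2.
have Npos : 0 < N by rewrite sqrtr_gt0.
have nnabs m : nn (q m) = `|f m| * N.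
  by rewrite -[LHS]ger0_norm ?nn_ge0 // -sqrtr_sqr nnsq sqrtrM ?sqr_ge0 // sqrtr_sqr.
pose S := Wv h c0 * X c0 + Wv h c1 * X c1 + Wv h c2 * X c2.
pose sg := N * S / X2.
have key m : f m != 0 -> l m = Complex (complex.Re h.1) ((epsR (f m))%:~R * sg).
  move=> fn.
  have nnz : nn (q m) != 0 by rewrite nnabs mulf_neq0 ?normr_eq0 // gt_eqF.
  have [e1 _ _ _] := stab_eq (Hh m).
  have reE : complex.Re (l m) = complex.Re h.1 by apply: (mulIf nnz); rewrite -e1.
  have W0 := Wn_lem (Hh m) c0; have W1 := Wn_lem (Hh m) c1; have W2 := Wn_lem (Hh m) c2.
  rewrite !Hrep !nnabs in W0 W1 W2.
  have W0' := congr1 ( *%R^~ (X c0)) W0; have W1' := congr1 ( *%R^~ (X c1)) W1.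
  have W2' := congr1 ( *%R^~ (X c2)) W2; simpl in W0', W1', W2'.
  have hS : S * (`|f m| * N) = complex.Im (l m) * f m * X2 by rewrite /S /X2; lra.
  have imE : complex.Im (l m) = (epsR (f m))%:~R * sg.
    apply: (mulIf (mulf_neq0 fn X2n)).
    rewrite mulrA -hS (abs_eps fn) /sg; field; exact: X2n.
  by move: reE imE; case: (l m) => a b /= -> ->.
have fn1 : f m1 != 0.
  by move: hm1; rewrite nnabs mulf_eq0 negb_or normr_eq0 => /andP[].
exists (complex.Re h.1), sg; split; last exact: key.
have := Hl m1; rewrite (key m1 fn1) /csq /= exprMn (eps_sq fn1) mul1r; by [].
Qed.
Lemma th_step (R : realType) k (th : 'I_k -> R) (hz : conformal_data th) (i j : 'I_k) :
  nat_of_ord j = i.+1 -> th i < th j.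
Proof.
move=> hj; have [_ [_ H]] := hz.
have hi : (i.+1 < k)%N by rewrite -hj ltn_ord.
have -> : j = ordS i by apply: val_inj; rewrite /= modn_small ?hj.
exact: H.
Qed.

Lemma th_mono (R : realType) k (th : 'I_k -> R) (hz : conformal_data th) (i j : 'I_k) :
  (i < j)%N -> th i < th j.
Proof.
move=> hij.
suff H : forall n (j : 'I_k), nat_of_ord j = (i + n.+1)%N -> th i < th j.
  by apply: (H (j - i.+1)%N); lia.
elim=> [|n IH] j' hj; first by apply: (th_step hz); lia.
have jk : (i + n.+1 < k)%N by move: (ltn_ord j'); lia.
apply: (lt_trans (IH (Ordinal jk) erefl)); apply: (th_step hz) => /=; lia.
Qed.

Lemma th_bounds (R : realType) k (th : 'I_k -> R) (hz : conformal_data th) (m : 'I_k) :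
  0 <= th m / 2 /\ th m / 2 < pi.
Proof. have [H _] := hz; have /andP[a b] := H m; split; lra. Qed.

Lemma three_pt (R : realType) k (th : 'I_k -> R) (hz : conformal_data th) (al be : R)
  (i j l : 'I_k) : (i < j)%N -> (j < l)%N ->
  exists p r : R, [/\ 0 < p, 0 < r &
    al * cos (th j / 2) + be * sin (th j / 2) =
    p * (al * cos (th i / 2) + be * sin (th i / 2)) + r * (al * cos (th l / 2) + be * sin (th l / 2))].
Proof.
move=> hij hjl.
have tij := th_mono hz hij; have tjl := th_mono hz hjl.
have [ai bi] := th_bounds hz i; have [aj bj] := th_bounds hz j; have [al' bl] := th_bounds hz l.
set a := th i / 2 in ai bi *; set b := th j / 2 in aj bj *; set c := th l / 2 in al' bl *.
have ab : a < b by rewrite /a /b; lra.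
have bc : b < c by rewrite /b /c; lra.
have s1 : 0 < sin (c - b) by apply: sin_gt0_pi; apply/andP; split; lra.
have s2 : 0 < sin (b - a) by apply: sin_gt0_pi; apply/andP; split; lra.
have s3 : 0 < sin (c - a) by apply: sin_gt0_pi; apply/andP; split; lra.
have id : (al * cos b + be * sin b) * sin (c - a) =
   (al * cos a + be * sin a) * sin (c - b) + (al * cos c + be * sin c) * sin (b - a).
  rewrite !sinB; ring.
exists (sin (c - b) / sin (c - a)), (sin (b - a) / sin (c - a)); split.
- exact: divr_gt0.
- exact: divr_gt0.
- rewrite -[LHS](mulfK (lt0r_neq0 s3)) id; field; exact: lt0r_neq0 s3.
Qed.

Definition Mmat (R : realType) (h : quat R) : 'M[R]_3 := \matrix_(d < 3, c < 3) Mc h c d.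

Lemma nuE (R : realType) k (q : 'I_k -> quat R) m (c : 'I_3) : nu q m c = nuc (q m) c.
Proof. by rewrite mxE. Qed.

Lemma nu_hq (R : realType) k (h : quat R) (q : 'I_k -> quat R) :
  nu (fun m => qmul h (q m)) = nu q *m Mmat h.
Proof.
apply/matrixP => m c; rewrite nuE mxE.
under eq_bigr => j _ do rewrite nuE mxE.
rewrite !big_ord_recr big_ord0 /= add0r (equiv_c h (q m) (ltn_ord c)).
ring.
Qed.

Lemma muR_R (R : realType) k (B : 'M[R]_(k, k - 2)) (q : 'I_k -> quat R) :
  inRset B q -> muR B q = 0.
Proof.
move=> [_ [q' [[_ mu0] [h [_ Hh]]]]].
have -> : q = (fun m => qmul h (q' m)) by apply: boolp.funext => m; rewrite Hh.
by rewrite /muR nu_hq trmx_mul -mulmxA -/(muR B q') mu0 mulmx0.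
Qed.

Lemma colW (R : realType) k (th : 'I_k -> R) (B : 'M[R]_(k, k - 2)) (q : 'I_k -> quat R)
  (hB : forall w : 'rV[R]_k, w *m B = 0 <-> inW th w) :
  muR B q = 0 -> forall c : 'I_3, exists ab : R * R,
    forall m, nu q m c = ab.1 * cos (th m / 2) + ab.2 * sin (th m / 2).
Proof.
move=> mu0 c.
have : (\row_m nu q m c) *m B = 0.
  have := congr1 (row c) mu0; rewrite /muR row_mul row0 => <-.
  by congr (_ *m _); apply/rowP => m; rewrite !mxE.
move/hB => [a [b hw]]; exists (a, b) => m.
by have := congr1 (fun M : 'rV[R]_k => M 0 m) hw; rewrite !mxE /= => ->.
Qed.

Definition decomp (R : realType) k (th : 'I_k -> R) (q : 'I_k -> quat R) : Prop :=
  exists (w : 'rV[R]_k) (x : 'rV[R]_3), inW th w /\ nu q = w^T *m x.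

Lemma dec_of (R : realType) k (th : 'I_k -> R) (q : 'I_k -> quat R) (A Bv : 'I_3 -> R)
  (Hrep : forall m (c : 'I_3), nu q m c = A c * cos (th m / 2) + Bv c * sin (th m / 2))
  (p r : R) : (p != 0 \/ r != 0) -> (forall c, p * A c + r * Bv c = 0) -> decomp th q.
Proof.
move=> hpr H.
have [rn|r0] := eqVneq r 0; last first.
  exists (1 *: (\row_i complex.Re (zS th i)) + (- p / r) *: (\row_i complex.Im (zS th i))).
  exists (\row_c A c); split; first by exists 1, (- p / r).
  apply/matrixP => m c; rewrite Hrep [RHS]mxE big_ord1 !mxE /=.
  have e : r * Bv c = - (p * A c) by apply/eqP; rewrite -addr_eq0 addrC H.
  have hb : Bv c = - p * A c / r.
    by rewrite -[Bv c](mulKf r0) e; field.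
  rewrite hb; field; exact: r0.
case: hpr => [pn|]; last by rewrite rn eqxx.
have hA : forall c, A c = 0.
  by move=> c; have := H c; rewrite rn mul0r addr0 => /eqP; rewrite mulf_eq0 (negbTE pn) => /eqP.
exists (0 *: (\row_i complex.Re (zS th i)) + 1 *: (\row_i complex.Im (zS th i))).
exists (\row_c Bv c); split; first by exists 0, 1.
apply/matrixP => m c; rewrite Hrep [RHS]mxE big_ord1 !mxE hA /=; ring.
Qed.
Lemma part1 (R : realType) k (th : 'I_k -> R) (B : 'M[R]_(k, k - 2)) (hz : conformal_data th)
  (hB : forall w : 'rV[R]_k, w *m B = 0 <-> inW th w) (k1 : (1 < k)%N)
  (q : 'I_k -> quat R) (qR : inRset B q) (nd : ~ decomp th q) : finite_set (stabT q).
Proof.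
have k0 : (0 < k)%N by lia.
pose i0 : 'I_k := Ordinal k0; pose i1 : 'I_k := Ordinal k1.
have cw := colW hB (muR_R qR).
have [ab Hab] := @boolp.choice _ _ (fun c (ab : R * R) =>
   forall m, nu q m c = ab.1 * cos (th m / 2) + ab.2 * sin (th m / 2)) cw.
pose A c := (ab c).1; pose Bv c := (ab c).2.
have Hrep m (c : 'I_3) : nu q m c = A c * cos (th m / 2) + Bv c * sin (th m / 2) := Hab c m.
have ND : forall p r : R, (forall c, p * A c + r * Bv c = 0) -> p = 0 /\ r = 0.
  move=> p r H; apply: NNPP => hn; apply: nd; apply: (dec_of Hrep (p:=p) (r:=r)) => //.
  case: (eqVneq p 0) => [p0|pn]; last by left.
  by right; apply/eqP => r0; apply: hn.
have th0 : th i0 = 0 by have [_ [H _]] := hz; exact: H.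
have C0 : cos (th i0 / 2) = 1 /\ sin (th i0 / 2) = 0 by rewrite th0 mul0r cos0 sin0.
have S1 : 0 < sin (th i1 / 2).
  apply: sin_gt0_pi; have := th_mono hz (isT : (i0 < i1)%N); rewrite th0 => H.
  have [_ b] := th_bounds hz i1; apply/andP; split; lra.
have Hrep' m (c : 'I_3) : nuc (q m) c = A c * cos (th m / 2) + Bv c * sin (th m / 2).
  by rewrite -nuE Hrep.
apply: (@sub_finite_set _ _ [set (fun _ : 'I_k => Complex (1 : R) 0); (fun _ => Complex (-1) 0)]);
  last exact: finite_set2.
move=> l [Hl [h [_ Hh]]].
have [g [g2 Hg]] := @core1 R k q A Bv (fun m => cos (th m / 2)) (fun m => sin (th m / 2)) i0 i1
   Hrep' (fun m => cos2Dsin2 _) C0 S1 ND l h Hl Hh.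
have /orP [/eqP g1|/eqP g1] : (g == 1) || (g == -1) by rewrite -sqrf_eq1 g2.
  by left; apply: boolp.funext => m; rewrite Hg g1.
by right; apply: boolp.funext => m; rewrite Hg g1.
Qed.

Lemma nn0 (R : realType) (p : quat R) : nn p = 0 -> p = qzero R.
Proof.
move: p => [[a b] [c d]]; rewrite /nn /csq /= => h.
have a0 : a = 0 by nra.
have b0 : b = 0 by nra.
have c0 : c = 0 by nra.
have d0 : d = 0 by nra.
by rewrite a0 b0 c0 d0.
Qed.

Definition vcD k (u : 'I_k -> int * int) (a : bool) (m : 'I_k) : int :=
  if a then (vS u m).1 else (vS u m).2.
Definition ucD k (u : 'I_k -> int * int) (a : bool) (m : 'I_k) : int :=
  if a then (u m).1 else (u m).2.

Lemma vcE k (u : 'I_k -> int * int) a m :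
  vcD u a m = ucD u a m + (if nat_of_ord m == 0%N then 1 else -1) * ucD u a (ord_pred m).
Proof.
rewrite /vcD /ucD /vS /=; case: (nat_of_ord m == 0%N); case: a => /=; ring.
Qed.

Lemma stab_data (R : realType) k (u : 'I_k -> int * int) (q : 'I_k -> quat R)
  (f : 'I_k -> R) (X : 'I_3 -> R)
  (Hrep : forall m (c : 'I_3), nuc (q m) c = f m * X c) (Hq : exists m, nn (q m) != 0)
  (l : 'I_k -> R[i]) (hl : stabGS u q l) :
  exists mu : R[i], [/\ mu != 0, (forall m, f m != 0 -> l m = mu ^ epsR (f m)),
     (forall m, l m != 0) & (forall a : bool, \prod_m l m ^ (vcD u a m) = 1)].
Proof.
case: hl => [[t [tg tl]] [h [_ Hh]]].
have Hl : inTk l by move=> m; rewrite tl csq_expc.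
have [g [s [gs Hg]]] := core2 Hrep Hq Hl Hh.
pose mu := Complex g s.
have mm : mu * Complex g (- s) = 1.
  apply/eqP; rewrite eq_complex /= -gs; apply/andP; split; apply/eqP; ring.
have mun : mu != 0.
  by apply/eqP => h0; move: mm; rewrite h0 mul0r => /eqP; rewrite eq_sym oner_eq0.
have muinv : mu^-1 = Complex g (- s) := mulr1_eq mm.
exists mu; split => //.
- move=> m fn; rewrite (Hg m fn); case: (epsR_pm fn) => ->.
    by rewrite int1R mul1r expr1z.
  by rewrite intN1R mulN1r exprN1 muinv.
- by move=> m; rewrite tl expc_neq0.
- move=> a; pose a' : 'I_2 := if a then ord0 else ord_max.
  have H := congr1 (fun M : 'rV[R]_2 => M 0 a') tg; rewrite /= [LHS]mxE [RHS]mxE in H.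
  have E : \sum_m (vcD u a m)%:~R * t 0 m = 0.
    rewrite -[RHS]H; apply: eq_bigr => m _; rewrite mxE /a' mulrC /vcD; by destruct a.
  rewrite -[RHS](expc0 R) -E expc_sum; apply: eq_bigr => m _.
  by rewrite expc_int tl.
Qed.

Lemma prodP (R : realType) k (P : pred 'I_k) (mu : R[i]) (l : 'I_k -> R[i]) (e v : 'I_k -> int) :
  mu != 0 -> (forall m, P m -> l m = mu ^ e m) ->
  \prod_(m | P m) l m ^ v m = mu ^ (\sum_(m | P m) e m * v m).
Proof.
move=> mn H; apply: (big_rec2 (fun x y => x = mu ^ y)) => // m x y Pm ->.
by rewrite H // exprz_exp expfzDr.
Qed.

Lemma finite_stab (R : realType) k (u : 'I_k -> int * int) (q : 'I_k -> quat R)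
  (f : 'I_k -> R) (N : nat) : (0 < N)%N ->
  (forall l, stabGS u q l -> exists mu rho : R[i],
     [/\ mu ^+ N = 1, rho ^+ N = 1 & l = fun m => if f m == 0 then rho else mu ^ epsR (f m)]) ->
  finite_set (stabGS u q).
Proof.
move=> N0 H.
apply: (@sub_finite_set _ _ [set (fun m => if f m == 0 then y else x ^ epsR (f m)) |
    x in [set z : R[i] | z ^+ N = 1] & y in [set z : R[i] | z ^+ N = 1]]);
  last exact: finite_image2 (roots_fin R N0) (roots_fin R N0).
move=> l /H [mu [rho [h1 h2 ->]]]; exists mu => //; exists rho => //.
Qed.

Lemma finI (R : realType) k (u : 'I_k -> int * int) (q : 'I_k -> quat R)
  (f : 'I_k -> R) (X : 'I_3 -> R)
  (Hrep : forall m (c : 'I_3), nuc (q m) c = f m * X c) (Hq : exists m, nn (q m) != 0)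
  (fnz : forall m, f m != 0) (a : bool) (D : int)
  (HA : \sum_m epsR (f m) * vcD u a m = D) (Dn : D != 0) : finite_set (stabGS u q).
Proof.
apply: (@finite_stab _ _ u q f `|D|%N); first by rewrite absz_gt0.
move=> l hl; have [mu [mun Hm lnz Hprod]] := stab_data Hrep Hq hl.
have hmu : mu ^ D = 1.
  have := Hprod a; rewrite (@prodP _ _ predT mu l (fun m => epsR (f m)) (vcD u a) mun) //.
    by rewrite HA.
  by move=> m _; apply: Hm.
exists mu, 1; split; [exact: pow_root mun hmu | exact: expr1n |].
by apply: boolp.funext => m; rewrite (negbTE (fnz m)) (Hm m (fnz m)).
Qed.

Lemma finII (R : realType) k (u : 'I_k -> int * int) (q : 'I_k -> quat R)
  (f : 'I_k -> R) (X : 'I_3 -> R)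
  (Hrep : forall m (c : 'I_3), nuc (q m) c = f m * X c) (Hq : exists m, nn (q m) != 0)
  (m0 : 'I_k) (f0 : f m0 = 0) (fnz : forall m, m != m0 -> f m != 0) (A b : bool -> int)
  (HA : forall a, \sum_m epsR (f m) * vcD u a m = A a) (Hb : forall a, vcD u a m0 = b a)
  (Dn : A true * b false - A false * b true != 0) : finite_set (stabGS u q).
Proof.
apply: (@finite_stab _ _ u q f (absz (A true * b false - A false * b true)%R)); first by rewrite absz_gt0.
move=> l hl; have [mu [mun Hm lnz Hprod]] := stab_data Hrep Hq hl.
pose rho := l m0.
have rel a : mu ^ A a * rho ^ b a = 1.
  have HA' : \sum_(m | m != m0) epsR (f m) * vcD u a m = A a.
    by rewrite -HA [RHS](bigD1 m0) //= f0 epsR_0 mul0r add0r.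
  have := Hprod a; rewrite (bigD1 m0) //= (@prodP _ _ (fun m => m != m0) mu l (fun m => epsR (f m)) (vcD u a) mun).
    by rewrite HA' Hb mulrC.
  by move=> m mn; apply: Hm; apply: fnz.
have [h1 h2] := two_rel mun (lnz m0) (rel true) (rel false).
exists mu, rho; split; [exact: pow_root mun h1 | exact: pow_root (lnz m0) h2 |].
apply: boolp.funext => m; case: (eqVneq m m0) => [->|mn]; first by rewrite f0 eqxx.
by rewrite (negbTE (fnz m mn)) (Hm m (fnz m mn)).
Qed.
Lemma part2dec (R : realType) k (u : 'I_k -> int * int) (th : 'I_k -> R) (hS : admissible_S u)
 (hz : conformal_data th) (k1 : (1 < k)%N) (q : 'I_k -> quat R) (qn : qvec_nonzero q)
 (w : 'rV[R]_k) (x : 'rV[R]_3) (hw : inW th w) (hnu : nu q = w^T *m x) : finite_set (stabGS u q).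
Proof.
pose f m := w 0 m. pose X (c : 'I_3) := x 0 c.
have Hrep m (c : 'I_3) : nuc (q m) c = f m * X c by rewrite -nuE hnu mxE big_ord1 !mxE.
have Hq : exists m, nn (q m) != 0.
  case: qn => m hm; exists m; apply/eqP => /nn0 h0; by rewrite h0 eqxx in hm.
have [al [be hwe]] := hw.
have fE m : f m = al * cos (th m / 2) + be * sin (th m / 2) by rewrite /f hwe !mxE.
have H3 : forall i j l : 'I_k, (i < j)%N -> (j < l)%N ->
    exists p r : R, [/\ 0 < p, 0 < r & f j = p * f i + r * f l].
  by move=> i j l hij hjl; rewrite !fE; apply: three_pt.
have Hnz : exists m, f m != 0.
  case: Hq => m hm; exists m; apply/eqP => f0; move: hm; rewrite nuc0_nn ?eqxx // => c.
  by rewrite Hrep f0 mul0r.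
have sumE a : \sum_m epsR (f m) * vcD u a m = \sum_m cS (fun m => epsR (f m)) m * ucD u a m.
  by rewrite -telescope; apply: eq_bigr => m _; rewrite vcE.
have detn (i : 'I_k) : det2 (u i) (u (ordS i)) != 0 by have [_ [H _]] := hS.
have k0 : (0 < k)%N by lia.
have [[e [j [he Hp]]]|[e [he Hp]]|[e [m0 [he m0p Hp]]]] := pattern k1 H3 Hnz.
-
  have jk : (minn j k.-1 < k)%N by lia.
  pose jo : 'I_k := Ordinal jk.
  have {Hp}Hp m : epsR (f m) = if (m <= jo)%N then e else - e.
    rewrite Hp /=; have hm := ltn_ord m; case: ifP => h1; case: ifP => h2 //; lia.
  have fnz m : f m != 0.
    apply/eqP => h; move: (Hp m); rewrite h epsR_0; case: ifP => _; case: he => -> //.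
  have ujn : exists a, ucD u a jo != 0.
    case: (eqVneq (u jo).1 0) => h1; last by exists true.
    case: (eqVneq (u jo).2 0) => h2; last by exists false.
    by move: (detn jo); rewrite /det2 h1 h2 !mul0r subrr eqxx.
  case: ujn => a an.
  apply: (@finI _ _ u q f X Hrep Hq fnz a (2 * e * ucD u a jo)).
    rewrite sumE; under eq_bigr => m _ do rewrite (cS_I he Hp).
    exact: sum_delta.
  by rewrite !mulf_neq0 //; case: he => ->.
-
  pose i0 : 'I_k := Ordinal k0; pose iL := ord_pred i0.
  have f0 : f i0 = 0 by apply: epsR_zero; rewrite Hp.
  have fnz m : m != i0 -> f m != 0.
    move=> mn; apply/eqP => h; move: (Hp m); rewrite h epsR_0 ifN.
      by case: he => ->.
    by apply: contraNN mn => /eqP hm; apply/eqP; apply: val_inj.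
  have iLv : nat_of_ord iL = k.-1 by apply: ord_pred_val0.
  have iLS : ordS iL = i0 by rewrite /iL ord_predK.
  have e2 : 2 * e != 0 by rewrite mulf_neq0 //; case: he => ->.
  apply: (@finII _ _ u q f X Hrep Hq i0 f0 fnz
     (fun a => - e * ucD u a i0 + e * ucD u a iL) (fun a => ucD u a i0 + ucD u a iL)).
  + move=> a; rewrite sumE; under eq_bigr => m _ do rewrite (cS_II0 k1 he Hp) mulrDl.
    rewrite big_split /= (sum_delta i0); congr (_ + _).
    by rewrite -iLv sum_delta.
  + by move=> a; rewrite vcE /= mul1r.
  + have hdet := detn iL; rewrite iLS in hdet.
    move: hdet; apply: contraNN => /eqP H; apply/eqP; rewrite /det2.
    apply: (mulfI e2); rewrite mulr0 -H /ucD /=; ring.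
-
  pose P := ord_pred m0.
  have f0 : f m0 = 0 by apply: epsR_zero; rewrite Hp ltnn eqxx.
  have fnz m : m != m0 -> f m != 0.
    move=> mn; apply/eqP => h; move: (Hp m); rewrite h epsR_0.
    have -> : (nat_of_ord m == nat_of_ord m0) = false.
      by apply/negbTE; apply: contraNN mn => /eqP hm; apply/eqP; apply: val_inj.
    by case: ifP => _; case: he => ->.
  have Pv : nat_of_ord P = m0.-1 by apply: ord_pred_val.
  have PS : ordS P = m0 by rewrite /P ord_predK.
  have e2 : 2 * e != 0 by rewrite mulf_neq0 //; case: he => ->.
  apply: (@finII _ _ u q f X Hrep Hq m0 f0 fnz
     (fun a => e * ucD u a P + e * ucD u a m0) (fun a => ucD u a m0 - ucD u a P)).
  + move=> a; rewrite sumE; under eq_bigr => m _ do rewrite (cS_IIm m0p he Hp) mulrDl.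
    rewrite big_split /= (sum_delta m0); congr (_ + _).
    by rewrite -Pv sum_delta.
  + move=> a; rewrite vcE ifN ?mulN1r //; apply/eqP; lia.
  + have hdet := detn P; rewrite PS in hdet.
    move: hdet; apply: contraNN => /eqP H; apply/eqP; rewrite /det2.
    apply: (mulfI e2); rewrite mulr0 -H /ucD /=; ring.
Qed.

Lemma k_ge2 k (u : 'I_k -> int * int) : admissible_S u -> (1 < k)%N.
Proof.
case: k u => [|[|k]] u hS //.
  have [gen _] := hS; have [c hc] := gen (1, 0); move: hc; rewrite !big_ord0.
  by move=> /(congr1 fst).
have [_ [hd _]] := hS; have := hd ord0.
have -> : ordS (ord0 : 'I_1) = ord0 by apply: val_inj.
by rewrite /det2 mulrC subrr eqxx.
Qed.

Unset Implicit Arguments.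

Theorem mainTheorem5 (R : realType) (k : nat) (u : 'I_k -> int * int) (th : 'I_k -> R)
  (B : 'M[R]_(k, k - 2))
  (hS : admissible_S u) (hz : conformal_data th)
  (hB : forall w : 'rV[R]_k, w *m B = 0 <-> inW th w) :
  (forall q : 'I_k -> quat R, inRset B q ->
     ~ (exists (w : 'rV[R]_k) (x : 'rV[R]_3), inW th w /\ nu q = w^T *m x) ->
     finite_set (stabT q))
  /\ (forall q : 'I_k -> quat R, inRset B q -> finite_set (stabGS u q)).
Proof.
have k1 := k_ge2 hS.
split.
  move=> q qR nd; apply: (part1 hz hB k1 qR) => -[w [x [hw hnu]]]; apply: nd; exists w, x; split => //.
move=> q qR.
case: (classic (exists (w : 'rV[R]_k) (x : 'rV[R]_3), inW th w /\ nu q = w^T *m x)) => [[w [x [hw hnu]]]|nd].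
  exact (part2dec hS hz k1 qR.1 hw hnu).
have nd' : ~ decomp th q.
  by move=> [w [x [hw hnu]]]; apply: nd; exists w, x; split.
apply: (sub_finite_set _ (part1 hz hB k1 qR nd')).
by move=> l [[t [tg tl]] hh]; split => // m; rewrite tl csq_expc.
Qed.
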